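(* For each integer $n\ge2$ there exists a homeomorphism $f$ of $B_n$ onto itself such that $S^{n-1}\cup\{0\}\subset\mathrm{Fix}(f)$ and, for some point $x\in B_n\setminus(S^{n-1}\cup\{0\})$, $\omega_f(x)$ is a subset of $S^{n-1}$ homeomorphic to a circle.
   Context: $B_n=\{x\in\mathbb{R}^n:\|x\|\le1\}$ (Euclidean norm), $S^{n-1}=\{x\in\mathbb{R}^n:\|x\|=1\}$ its boundary. $\mathrm{Fix}(f)$ is the set of fixed points of $f$, and $\omega_f(x)=\{y:\ \exists\, n_i\to+\infty,\ f^{n_i}(x)\to y\}$. *)

(* Defs.v *)
From HB Require Import structures.
From mathcomp Require Import all_boot all_order all_algebra.
From mathcomp Require Import all_classical all_reals all_analysis.
Set Implicit Arguments. Unset Strict Implicit. Unset Printing Implicit Defensive.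
Import Order.TTheory GRing.Theory Num.Theory.
Import numFieldNormedType.Exports.
Local Open Scope classical_set_scope.
Local Open Scope ring_scope.

Definition enorm {R : realType} {n : nat} (x : 'rV[R]_n) : R :=
  Num.sqrt (\sum_(i < n) x ord0 i ^+ 2).

Definition ball_n (R : realType) (n : nat) : set 'rV[R]_n := [set x | enorm x <= 1].
Definition sphere_n (R : realType) (n : nat) : set 'rV[R]_n := [set x | enorm x = 1].

Definition homeo_via {R : realType} {m k : nat}
  (A : set 'rV[R]_m) (B : set 'rV[R]_k) (f : 'rV[R]_m -> 'rV[R]_k) (g : 'rV[R]_k -> 'rV[R]_m) : Prop :=
  (forall x, A x -> B (f x)) /\ (forall y, B y -> A (g y)) /\
  (forall x, A x -> g (f x) = x) /\ (forall y, B y -> f (g y) = y) /\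
  {within A, continuous f} /\ {within B, continuous g}.

Definition homeomorphic {R : realType} {m k : nat} (A : set 'rV[R]_m) (B : set 'rV[R]_k) : Prop :=
  exists f g, homeo_via A B f g.

Definition Fix {R : realType} {n : nat} (D : set 'rV[R]_n) (f : 'rV[R]_n -> 'rV[R]_n) : set 'rV[R]_n :=
  [set x | D x /\ f x = x].

Definition omega_limit {R : realType} {n : nat} (f : 'rV[R]_n -> 'rV[R]_n) (x : 'rV[R]_n) : set 'rV[R]_n :=
  [set y | exists n_ : nat -> nat,
     (forall N : nat, exists M : nat, forall i : nat, (M <= i)%N -> (N <= n_ i)%N) /\
     ((fun i => iter (n_ i) f x) @ \oo --> y)].

Arguments ball_n R n : clear implicits.
Arguments sphere_n R n : clear implicits.

(* Main.v *)
Require Import Defs.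
From HB Require Import structures.
From mathcomp Require Import all_boot all_order all_algebra.
From mathcomp Require Import all_classical all_reals all_analysis.
From mathcomp Require Import ring lra.
Import Order.TTheory GRing.Theory Num.Theory.
Import numFieldNormedType.Exports.
Local Open Scope classical_set_scope.
Local Open Scope ring_scope.

Section Alg.
Variable R : realType.
Implicit Types r t : R.
Definition sF r : R := (2 - r) / (1 + r - r ^+ 2).
Definition phi r : R := r * sF r.
Definition Sq t : R := Num.sqrt (5 * t ^+ 2 - 8 * t + 4).
Definition sG t : R := 2 / ((2 - t) + Sq t).
Definition psi t : R := t * sG t.
Definition thF r : R := ln (1 + r * (1 - r)).

Lemma D_ge1 r : 0 <= r <= 1 -> 1 <= 1 + r - r ^+ 2.
Proof. move=> /andP[h0 h1]; nra. Qed.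

Lemma sF_gt0 r : 0 <= r <= 1 -> 0 < sF r.
Proof.
move=> hr; have hD := D_ge1 r hr; case/andP: hr => h0 h1.
rewrite /sF divr_gt0 //; lra.
Qed.

Lemma Sq2 t : Sq t ^+ 2 = 5 * t ^+ 2 - 8 * t + 4.
Proof. rewrite /Sq sqr_sqrtr //; have := sqr_ge0 (5 * t - 4); nra. Qed.

Lemma Sq_ge0 t : 0 <= Sq t.
Proof. exact: sqrtr_ge0. Qed.

Lemma phi01 r : 0 <= r <= 1 -> 0 <= phi r <= 1.
Proof.
move=> hr; have hD := D_ge1 r hr; case/andP: hr => h0 h1.
rewrite /phi /sF mulrA; apply/andP; split.
  apply: divr_ge0; nra.
rewrite ler_pdivrMr; nra.
Qed.

Lemma sGphi r : 0 <= r <= 1 -> sG (phi r) * sF r = 1.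
Proof.
move=> hr; have hD := D_ge1 r hr; case/andP: hr => h0 h1.
have hq : 0 <= r ^+ 2 - 2 * r + 2.
  have : 0 <= (r - 1) ^+ 2 by exact: sqr_ge0.
  rewrite expr2 => h; rewrite expr2; lra.
have hS : Sq (phi r) = (r ^+ 2 - 2 * r + 2) / (1 + r - r ^+ 2).
  rewrite /Sq -[X in Num.sqrt X](_ : ((r ^+ 2 - 2 * r + 2) / (1 + r - r ^+ 2)) ^+ 2 = _).
    rewrite sqrtr_sqr ger0_norm // divr_ge0 //; lra.
  rewrite /phi /sF; field; lra.
rewrite /sG hS /phi /sF; field; apply/andP; split; nra.
Qed.

Lemma den_ge1 t : 0 <= t <= 1 -> 1 <= (2 - t) + Sq t.
Proof. move=> /andP[h0 h1]; have := Sq_ge0 t; lra. Qed.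

Lemma sG_gt0 t : 0 <= t <= 1 -> 0 < sG t.
Proof. move=> ht; have := den_ge1 t ht; rewrite /sG => h; apply: divr_gt0; lra. Qed.

Lemma psi01 t : 0 <= t <= 1 -> 0 <= psi t <= 1.
Proof.
move=> ht; have hA := den_ge1 t ht; have hS2 := Sq2 t; have hS0 := Sq_ge0 t.
case/andP: ht => h0 h1.
rewrite /psi /sG mulrA; apply/andP; split.
  apply: divr_ge0; lra.
rewrite ler_pdivrMr; last lra.
have : 3 * t - 2 <= Sq t.
  rewrite leNgt; apply/negP => hlt.
  have : Sq t ^+ 2 < (3 * t - 2) ^+ 2.
    by rewrite ltr_pXn2r // ?nnegrE //; lra.
  rewrite hS2; nra.
lra.
Qed.

Lemma phipsi t : 0 <= t <= 1 -> phi (psi t) = t.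
Proof.
move=> ht; have hp := psi01 t ht; have hD := D_ge1 _ hp.
have hA := den_ge1 t ht; have hS2 := Sq2 t.
set A := (2 - t) + Sq t in hA.
have key : 4 * A - 4 * t - A ^+ 2 - 2 * t * A + 4 * t ^+ 2 = 0.
  rewrite /A; nra.
have e1 : psi t * (2 - psi t) = t * (1 + psi t - psi t ^+ 2).
  apply/eqP; rewrite -subr_eq0; apply/eqP.
  transitivity (t / A ^+ 2 * (4 * A - 4 * t - A ^+ 2 - 2 * t * A + 4 * t ^+ 2)).
    rewrite /psi /sG -/A; field; lra.
  by rewrite key mulr0.
rewrite /phi /sF mulrA e1; field; lra.
Qed.
End Alg.
Arguments sF {R}.
Arguments phi {R}.
Arguments Sq {R}.
Arguments sG {R}.
Arguments psi {R}.
Arguments thF {R}.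
Arguments D_ge1 {R r}.
Arguments sF_gt0 {R r}.
Arguments phi01 {R r}.
Arguments sGphi {R r}.
Arguments den_ge1 {R t}.
Arguments sG_gt0 {R t}.
Arguments psi01 {R t}.
Arguments phipsi {R t}.
Section Vec.
Variable R : realType.
Variable m : nat.
Local Notation V := 'rV[R]_(m.+2).
Implicit Types (a b c : R) (x : V).
Definition i0 : 'I_(m.+2) := ord0.
Definition i1 : 'I_(m.+2) := lift ord0 ord0.
Definition rot (a : R) (x : V) : V :=
  \row_j (if j == i0 then cos a * x ord0 i0 - sin a * x ord0 i1
          else if j == i1 then sin a * x ord0 i0 + cos a * x ord0 i1
          else x ord0 j).
Definition e0 : V := \row_j (if j == i0 then 1 else 0).

Lemma i10 : (i1 == i0) = false. Proof. by []. Qed.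
Lemma ii0 i : (lift ord0 (lift ord0 i) == i0) = false. Proof. by []. Qed.
Lemma ii1 i : (lift ord0 (lift ord0 i) == i1) = false. Proof. by []. Qed.

Lemma sum_split (F : 'I_(m.+2) -> R) :
  \sum_i F i = F i0 + F i1 + \sum_(i < m) F (lift ord0 (lift ord0 i)).
Proof. by rewrite big_ord_recl big_ord_recl addrA. Qed.

Lemma rot_i0 a x : rot a x ord0 i0 = cos a * x ord0 i0 - sin a * x ord0 i1.
Proof. by rewrite mxE eqxx. Qed.
Lemma rot_i1 a x : rot a x ord0 i1 = sin a * x ord0 i0 + cos a * x ord0 i1.
Proof. by rewrite mxE i10 eqxx. Qed.
Lemma rot_ii a x i : rot a x ord0 (lift ord0 (lift ord0 i)) = x ord0 (lift ord0 (lift ord0 i)).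
Proof. by rewrite mxE ii0 ii1. Qed.

Lemma enorm_ge0 (x : V) : 0 <= enorm x.
Proof. exact: sqrtr_ge0. Qed.

Lemma enorm_rot a x : enorm (rot a x) = enorm x.
Proof.
rewrite /enorm !(sum_split (fun i => _ ^+ 2)) rot_i0 rot_i1.
under eq_bigr do rewrite rot_ii.
congr (Num.sqrt (_ + _)).
have := sin2cos2 a; nra.
Qed.

Lemma enormZ c x : enorm (c *: x) = `|c| * enorm x.
Proof.
rewrite /enorm.
under eq_bigr do rewrite mxE exprMn.
by rewrite -mulr_sumr sqrtrM ?sqr_ge0 // sqrtr_sqr.
Qed.

Lemma rotZ a c x : rot a (c *: x) = c *: rot a x.
Proof.
apply/rowP => j; rewrite !mxE; case: ifP => _; first ring.
by case: ifP => _; ring.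
Qed.

Lemma rotD a b x : rot a (rot b x) = rot (a + b) x.
Proof.
apply/rowP => j; rewrite !mxE eqxx i10 eqxx cosD sinD.
case: ifP => h0; first ring.
case: ifP => h1; first ring.
by rewrite h0 h1.

Qed.

Lemma rot0 x : rot 0 x = x.
Proof.
apply/rowP => j; rewrite !mxE cos0 sin0.
case: ifP => [/eqP->|_]; first ring.
by case: ifP => [/eqP->|_] //; ring.
Qed.

Lemma enorm_e0 : enorm e0 = 1.
Proof.
rewrite /enorm sum_split !mxE eqxx i10 big1; last by move=> i _; rewrite mxE ii0 expr0n.
by rewrite expr1n expr0n /= !addr0 sqrtr1.
Qed.
End Vec.
Arguments rot {R m}.
Arguments e0 {R m}.

Lemma cvg_mxP {R : realType} (T : Type) (F : set_system T) {FF : Filter F}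
  m n (u : T -> 'M[R]_(m, n)) (l : 'M[R]_(m, n)) :
  (forall i j, (fun t => u t i j) @ F --> l i j) -> u @ F --> l.
Proof.
move=> H; apply/cvg_mx_entourageP => A entA.
apply: filter_forall => i; apply: filter_forall => j.
have := H i j; move/cvg_app_entourageP => /(_ A entA).
by apply: filterS => t ?; apply/mem_set.
Qed.

Section Cont.
Variable R : realType.
Variable m : nat.
Local Notation V := 'rV[R]_(m.+2).

Lemma enorm_cont : continuous (@enorm R m.+2).
Proof.
move=> x; rewrite /enorm.
apply: (@continuous_comp _ _ _ (fun x : V => \sum_i x ord0 i ^+ 2) Num.sqrt).
  apply: continuous_big; first exact: add_continuous.
  move=> i _ y; rewrite /GRing.exp /=.
  apply: continuousM; exact: coord_continuous.
exact: sqrt_continuous.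
Qed.

Lemma sF_cont r : 0 <= r <= 1 -> {for r, continuous (@sF R)}.
Proof.
move=> hr; have hD := D_ge1 hr.
apply: continuousM.
  apply: continuousB; [exact: cvg_cst | exact: cvg_id].
apply: continuousV; first by rewrite gt_eqF //; lra.
apply: continuousB; first apply: continuousD; [exact: cvg_cst|exact: cvg_id|].
rewrite /GRing.exp /=.
apply: continuousM; exact: cvg_id.
Qed.

Lemma thF_cont r : 0 <= r <= 1 -> {for r, continuous (@thF R)}.
Proof.
move=> /andP[h0 h1].
rewrite (_ : @thF R = (@ln R) \o (fun r : R => 1 + r * (1 - r))) //.
apply: (@continuous_comp _ _ _ (fun r : R => 1 + r * (1 - r)) (@ln R)).
  apply: continuousD; first exact: cvg_cst.
  apply: continuousM; first exact: cvg_id.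
  apply: continuousB; [exact: cvg_cst | exact: cvg_id].
apply: continuous_ln; nra.
Qed.

Lemma Sq_cont t : {for t, continuous (@Sq R)}.
Proof.
rewrite (_ : @Sq R = Num.sqrt \o (fun t : R => 5 * t ^+ 2 - 8 * t + 4)) //.
apply: (@continuous_comp _ _ _ (fun t : R => 5 * t ^+ 2 - 8 * t + 4) Num.sqrt); last exact: sqrt_continuous.
apply: continuousD; last exact: cvg_cst.
apply: continuousB; last by apply: continuousM; [exact: cvg_cst|exact: cvg_id].
apply: continuousM; first exact: cvg_cst.
rewrite /GRing.exp /=; apply: continuousM; exact: cvg_id.
Qed.

Lemma sG_cont t : 0 <= t <= 1 -> {for t, continuous (@sG R)}.
Proof.
move=> ht; have hA := den_ge1 ht.
apply: continuousM; first exact: cvg_cst.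
apply: continuousV; first by rewrite gt_eqF //; lra.
apply: continuousD; last exact: Sq_cont.
apply: continuousB; [exact: cvg_cst | exact: cvg_id].
Qed.

Lemma psi_cont t : 0 <= t <= 1 -> {for t, continuous (@psi R)}.
Proof. move=> ht; apply: continuousM; [exact: cvg_id | exact: sG_cont]. Qed.

Lemma rot_cont (a : V -> R) p : {for p, continuous a} ->
  {for p, continuous (fun x => rot (a x) x)}.
Proof.
move=> ha; apply: (@cvg_mxP R V (nbhs p) (@nbhs_filter V p)) => i j.
have E : forall x : V, rot (a x) x i j =
  if j == i0 m then cos (a x) * x ord0 (i0 m) - sin (a x) * x ord0 (i1 m)
  else if j == i1 m then sin (a x) * x ord0 (i0 m) + cos (a x) * x ord0 (i1 m)
  else x ord0 j.
  by move=> x; rewrite mxE.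
rewrite (funext E) E.
have hc : {for p, continuous ((@cos R) \o a)}.
  exact: (continuous_comp ha (@continuous_cos R _)).
have hs : {for p, continuous ((@sin R) \o a)}.
  exact: (continuous_comp ha (@continuous_sin R _)).
case: ifP => _.
  apply: cvgB; apply: cvgM => //; exact: coord_continuous.
case: ifP => _.
  apply: cvgD; apply: cvgM => //; exact: coord_continuous.
exact: coord_continuous.
Qed.
End Cont.

Section Homeo.
Variable R : realType.
Variable m : nat.
Local Notation V := 'rV[R]_(m.+2).
Implicit Types x y : V.

Definition fF x : V := sF (enorm x) *: rot (thF (enorm x)) x.
Definition gG y : V := sG (enorm y) *: rot (- thF (psi (enorm y))) y.

Lemma nrm01 x : enorm x <= 1 -> 0 <= enorm x <= 1.
Proof. by move=> h; rewrite enorm_ge0. Qed.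

Lemma fF_nrm x : enorm x <= 1 -> enorm (fF x) = phi (enorm x).
Proof.
move=> /nrm01 h; rewrite /fF enormZ enorm_rot ger0_norm; last exact/ltW/sF_gt0.
by rewrite /phi mulrC.
Qed.

Lemma gG_nrm y : enorm y <= 1 -> enorm (gG y) = psi (enorm y).
Proof.
move=> /nrm01 h; rewrite /gG enormZ enorm_rot ger0_norm; last exact/ltW/sG_gt0.
by rewrite /psi mulrC.
Qed.

Lemma psiphi (r : R) : 0 <= r <= 1 -> psi (phi r) = r.
Proof. by move=> h; rewrite /psi /phi -mulrA (mulrC (sF r)) sGphi // mulr1. Qed.

Lemma gf x : enorm x <= 1 -> gG (fF x) = x.
Proof.
move=> hx; have h := nrm01 _ hx.
rewrite /gG fF_nrm // psiphi // /fF rotZ scalerA rotD addNr rot0 sGphi //.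
by rewrite scale1r.
Qed.

Lemma fg y : enorm y <= 1 -> fF (gG y) = y.
Proof.
move=> hy; have h := nrm01 _ hy; have hp := psi01 h.
rewrite /fF gG_nrm // /gG rotZ scalerA rotD addrN rot0.
by have e := sGphi hp; rewrite phipsi // in e; rewrite mulrC e scale1r.
Qed.

Lemma fF_cont x : enorm x <= 1 -> {for x, continuous fF}.
Proof.
move=> /nrm01 h.
apply: continuousZ.
  exact: (continuous_comp (@enorm_cont R m x) (@sF_cont R _ h)).
apply: rot_cont.
exact: (continuous_comp (@enorm_cont R m x) (@thF_cont R _ h)).
Qed.

Lemma gG_cont y : enorm y <= 1 -> {for y, continuous gG}.
Proof.
move=> /nrm01 h.
apply: continuousZ.
  exact: (continuous_comp (@enorm_cont R m y) (@sG_cont R _ h)).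
apply: rot_cont.
apply: continuousN.
exact: (continuous_comp (@enorm_cont R m y)
  (continuous_comp (@psi_cont R _ h) (@thF_cont R _ (psi01 h)))).
Qed.

Lemma homeo_fg : homeo_via (ball_n R m.+2) (ball_n R m.+2) fF gG.
Proof.
split; first by move=> x hx; rewrite /ball_n /= fF_nrm //; case/andP: (phi01 (nrm01 _ hx)).
split; first by move=> x hx; rewrite /ball_n /= gG_nrm //; case/andP: (psi01 (nrm01 _ hx)).
split; first by move=> x hx; apply: gf.
split; first by move=> x hx; apply: fg.
split; apply: continuous_in_subspaceT => x; rewrite inE => hx.
  exact: fF_cont.
exact: gG_cont.
Qed.
End Homeo.

Section Dyn.
Variable R : realType.
Variable m : nat.
Local Notation V := 'rV[R]_(m.+2).

Definition rr (k : nat) : R := iter k phi (2^-1).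
Definition th (k : nat) : R := \sum_(j < k) thF (rr j).
Definition x0 : V := 2^-1 *: e0.

Lemma one_phi {r : R} : 0 <= r <= 1 -> 1 - phi r = (1 - r) / (1 + r * (1 - r)).
Proof.
move=> hr; have := D_ge1 hr; case/andP: hr => h0 h1 hD.
rewrite /phi /sF; field; nra.
Qed.

Lemma rr_bnd k : 2^-1 <= rr k < 1.
Proof.
elim: k => [|k /andP[h0 h1]] /=; first by rewrite /rr /=; apply/andP; split; lra.
rewrite /rr /= -/(rr k).
have hr : 0 <= rr k <= 1 by apply/andP; split; lra.
have e := one_phi hr.
have hD : 0 < 1 + rr k * (1 - rr k) by nra.
have hu : 0 < 1 - phi (rr k) by rewrite e; apply: divr_gt0; lra.
have : (1 - phi (rr k)) * (1 + rr k * (1 - rr k)) = 1 - rr k.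
  by rewrite e mulrAC -mulrA mulfV ?mulr1 //; lra.
move=> E; apply/andP; split; [nra | lra].
Qed.

Lemma rr01 k : 0 <= rr k <= 1.
Proof. by have /andP[h0 h1] := rr_bnd k; apply/andP; split; lra. Qed.

Lemma rrS k : rr k.+1 = phi (rr k).
Proof. by []. Qed.

Lemma thS k : th k.+1 = th k + thF (rr k).
Proof. by rewrite /th big_ord_recr. Qed.

Lemma orbit k : iter k (@fF R m) x0 = rr k *: rot (th k) e0.
Proof.
elim: k => [|k IH]; first by rewrite /= /th big_ord0 rot0.
rewrite iterS IH /fF enormZ enorm_rot enorm_e0 mulr1.
have /andP[h0 h1] := rr_bnd k.
rewrite ger0_norm; last lra.
by rewrite rotZ rotD scalerA rrS thS /phi mulrC addrC.
Qed.

Lemma u_bnd k : (k%:R / 2 + 2) * (1 - rr k) <= 1.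
Proof.
elim: k => [|k IH]; first by rewrite /rr /=; lra.
have /andP[h0 h1] := rr_bnd k.
have hr := rr01 k.
rewrite rrS one_phi // -addn1 natrD.
have hD : 0 < 1 + rr k * (1 - rr k) by nra.
rewrite mulrA ler_pdivrMr // mul1r.
nra.
Qed.

Lemma expth k : expR (th k) * (2 * (1 - rr k)) = 1.
Proof.
elim: k => [|k IH]; first by rewrite /th big_ord0 expR0 mul1r /rr /=; field.
have hr := rr01 k.
have hD : 0 < 1 + rr k * (1 - rr k) by case/andP: hr => ? ?; nra.
rewrite thS expRD rrS one_phi // /thF lnK ?posrE //.
rewrite -[RHS]IH; field; lra.
Qed.

Lemma step_bnd k : thF (rr k) <= 1 - rr k.
Proof.
have hr := rr01 k; case/andP: (hr) => h0 h1.
have hD : 0 < 1 + rr k * (1 - rr k) by nra.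
have := expR_ge1Dx (thF (rr k)).
rewrite /thF lnK ?posrE //; nra.
Qed.
End Dyn.

Section Dyn2.
Variable R : realType.

Lemma nat_big (x : R) : exists N : nat, forall k, (N <= k)%N -> x < k%:R.
Proof.
exists (Num.truncn x).+1 => k hk.
apply: (lt_le_trans (truncnS_gt x)); by rewrite ler_nat.
Qed.

Lemma u_small {e : R} : 0 < e -> exists K, forall k, (K <= k)%N -> 1 - rr R k < e.
Proof.
move=> he; have [K HK] := nat_big (2 / e).
exists K => k /HK hk.
have hb := u_bnd R k; have /andP[h0 h1] := rr_bnd R k.
have hke : 2 < k%:R * e by rewrite -ltr_pdivrMr.
have hk0 : 0 <= k%:R :> R by [].
nra.
Qed.

Lemma th_unb (M : R) : exists N, forall k, (N <= k)%N -> M <= th R k.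
Proof.
have [N HN] := nat_big (4 * expR M).
exists N => k /HN hk.
rewrite -ler_expR.
have E := expth R k; have hb := u_bnd R k; have /andP[h0 h1] := rr_bnd R k.
have hE := expR_gt0 (th R k).
have : k%:R / 2 + 2 <= 2 * expR (th R k) by nra.
nra.
Qed.

Lemma step_small {e : R} : 0 < e -> exists K, forall k, (K <= k)%N -> th R k.+1 - th R k < e.
Proof.
move=> he; have [K HK] := u_small he; exists K => k /HK hk.
rewrite thS addrAC subrr add0r; have := step_bnd R k; lra.
Qed.

Lemma dense_angles (t : nat -> R)
  (Hs : forall e, 0 < e -> exists K, forall k, (K <= k)%N -> t k.+1 - t k < e)
  (Hu : forall M, exists N, forall k, (N <= k)%N -> M <= t k)
  (b e : R) (N : nat) : 0 < e ->
  exists k, (N <= k)%N /\ exists z : nat, `|t k - (b + z%:R * (pi *+ 2))| < e.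
Proof.
move=> he; have [K HK] := Hs e he.
set K' := maxn N K.
have hpi : 0 < pi *+ 2 :> R by rewrite mulrn_wgt0 // pi_gt0.
have [z0 Hz] := nat_big ((t K' - b) / (pi *+ 2)).
have hz := Hz z0 (leqnn z0).
set T := b + z0%:R * (pi *+ 2).
have hT : t K' < T by rewrite /T -ltrBlDl -ltr_pdivrMr.
have [N2 HN2] := Hu T.
have exP : exists k, (K' <= k)%N && (T <= t k).
  exists (maxn K' N2); rewrite leq_maxl /=; apply: HN2; exact: leq_maxr.
case: (ex_minnP exP) => k /andP[hk1 hk2] hmin.
have hkK : K' != k by apply/eqP => ek; move: hT; rewrite ek ltNge hk2.
have hlt : (K' < k)%N by rewrite ltn_neqAle hkK hk1.
destruct k as [|j]; first by [].
have hj : (K' <= j)%N by [].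
have hjT : t j < T.
  rewrite ltNge; apply/negP => hTj.
  have := hmin j; rewrite hj hTj => /(_ isT); by rewrite ltnn.
have hstep := HK j (leq_trans (leq_maxr N K) hj).
exists j.+1; split; first by apply: leq_trans (leq_maxl N K) _; apply: ltnW.
exists z0; rewrite -/T ger0_norm; lra.
Qed.

Lemma cos_per (x : R) (z : nat) : cos (x + z%:R * (pi *+ 2)) = cos x /\ sin (x + z%:R * (pi *+ 2)) = sin x.
Proof.
elim: z => [|z [IHc IHs]]; first by rewrite mul0r addr0.
rewrite -addn1 natrD mulrDl mul1r addrA (cosD (x + _)) (sinD (x + _)) IHc IHs cos2pi sin2pi; split; ring.
Qed.

Lemma angle (a b : R) : a ^+ 2 + b ^+ 2 = 1 -> exists be, cos be = a /\ sin be = b.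
Proof.
move=> hab.
have ha : -1 <= a <= 1.
  have : a ^+ 2 <= 1 by have := sqr_ge0 b; lra.
  by move=> h; apply/andP; split; nra.
have hcos : cos (acos a) = a by apply: acosK; rewrite in_itv.
have hsin : sin (acos a) = `|b|.
  by rewrite sin_acos // -hab addrAC subrr add0r sqrtr_sqr.
case: (lerP 0 b) => hb.
  by exists (acos a); rewrite hcos hsin ger0_norm.
exists (- acos a); rewrite cosN sinN hcos hsin ltr0_norm //; split => //.
by rewrite opprK.
Qed.
End Dyn2.

Section Omega.
Variable R : realType.
Variable m : nat.
Local Notation V := 'rV[R]_(m.+2).

Lemma rrn_cvg (n_ : nat -> nat) :
  (forall N : nat, exists M : nat, forall i : nat, (M <= i)%N -> (N <= n_ i)%N) ->
  (fun i => rr R (n_ i)) @ \oo --> (1 : R).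
Proof.
move=> Hn; apply/cvgrPdist_lt => e he.
have [K HK] := @u_small R _ he; have [M HM] := Hn K.
exists M => // i /= hi.
have := HK _ (HM _ hi); have /andP[h0 h1] := rr_bnd R (n_ i).
rewrite ger0_norm; lra.
Qed.

Definition Cset : set V := [set y | y ord0 (i0 m) ^+ 2 + y ord0 (i1 m) ^+ 2 = 1 /\
  forall j, j != i0 m -> j != i1 m -> y ord0 j = 0].

Lemma rot_e0E (a : R) j : (rot a (@e0 R m)) ord0 j =
  if j == i0 m then cos a else if j == i1 m then sin a else 0.
Proof.
rewrite !mxE eqxx i10; case: ifP => h0; first ring.
by case: ifP => h1; [ring | rewrite h0].
Qed.

Lemma seq_entry k j : (iter k (@fF R m) (x0 R m)) ord0 j = rr R k *
  (if j == i0 m then cos (th R k) else if j == i1 m then sin (th R k) else 0).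
Proof. by rewrite orbit mxE rot_e0E. Qed.

Lemma omega_C y : omega_limit (@fF R m) (x0 R m) y -> Cset y.
Proof.
case=> n_ [Hn hc].
have hcoord : forall j, (fun i => rr R (n_ i) * (if j == i0 m then cos (th R (n_ i))
    else if j == i1 m then sin (th R (n_ i)) else 0)) @ \oo --> y ord0 j.
  move=> j.
  have H := @continuous_cvg nat V R _ _ (fun i => iter (n_ i) (@fF R m) (x0 R m))
    (fun M => M ord0 j) y (@coord_continuous R 1 m.+2 ord0 j y) hc.
  have E : (fun i => rr R (n_ i) * (if j == i0 m then cos (th R (n_ i))
    else if j == i1 m then sin (th R (n_ i)) else 0)) =
    (fun M : V => M ord0 j) \o (fun i => iter (n_ i) (@fF R m) (x0 R m)).
    by apply: funext => i /=; rewrite seq_entry.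
  by rewrite E; apply: H.
split.
  have h0 := hcoord (i0 m); rewrite eqxx in h0.
  have h1 := hcoord (i1 m); rewrite i10 eqxx in h1.
  have hA := cvgD (FF := eventually_filter) (cvgM (FF := eventually_filter) h0 h0) (cvgM (FF := eventually_filter) h1 h1).
  have hr := rrn_cvg _ Hn.
  have hB := cvgM (FF := eventually_filter) hr hr.
  have E : ((fun i => rr R (n_ i) * cos (th R (n_ i))) \* (fun i => rr R (n_ i) * cos (th R (n_ i))) +
     (fun i => rr R (n_ i) * sin (th R (n_ i))) \* (fun i => rr R (n_ i) * sin (th R (n_ i))))
     = (fun i => rr R (n_ i)) \* (fun i => rr R (n_ i)).
    apply: funext => i; rewrite !fctE /=; have := sin2cos2 (th R (n_ i)); rewrite !expr2 => h.
    transitivity (rr R (n_ i) * rr R (n_ i) * (sin (th R (n_ i)) * sin (th R (n_ i)) +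
       cos (th R (n_ i)) * cos (th R (n_ i)))); first ring.
    rewrite h; ring.
  rewrite E in hA.
  have := cvg_unique _ hA hB; rewrite mulr1 !expr2 => ->; done.
move=> j hj0 hj1.
have hj := hcoord j; rewrite (negbTE hj0) (negbTE hj1) in hj.
have E0 : (fun i => rr R (n_ i) * 0) = (fun _ => 0) by apply: funext => i; rewrite mulr0.
rewrite E0 in hj.
have hk := @cvg_cst _ (0:R) nat \oo eventually_filter.
first [ exact: (cvg_unique _ hj hk) | idtac "A"; exact: (@cvg_unique _ _ _ _ _ _ hj hk) | idtac "B"; apply/esym; apply: (cvg_unique _ hk hj) | idtac "C"; exact: (cvg_unique _ hj (hk _)) ].
Qed.

Lemma inv_small (e : R) : 0 < e -> exists N, forall i, (N <= i)%N -> (i.+1%:R)^-1 < e.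
Proof.
move=> he; have [N HN] := nat_big R e^-1; exists N => i /HN hi.
have hi1 : (i%:R : R) < i.+1%:R by rewrite ltr_nat.
have hpos : (0 : R) < i.+1%:R by rewrite ltr0n.
rewrite -(invrK e) ltf_pV2 ?posrE ?invr_gt0 //; lra.
Qed.

Lemma C_omega y : Cset y -> omega_limit (@fF R m) (x0 R m) y.
Proof.
case=> hy01 hyj.
have [be [hcb hsb]] := @angle R _ _ hy01.
have hy : y = rot be (@e0 R m).
  apply/rowP => j; rewrite rot_e0E; case: ifP => [/eqP->|h0] //.
  case: ifP => [/eqP->|h1] //; apply: hyj; by rewrite ?h0 ?h1.
have H : forall i : nat, exists p : nat * nat, (i <= p.1)%N /\
    `|th R p.1 - (be + p.2%:R * (pi *+ 2))| < (i.+1%:R)^-1.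
  move=> i.
  have hpos : 0 < (i.+1%:R : R)^-1 by rewrite invr_gt0 ltr0n.
  have [k [hk [z hz]]] := @dense_angles R (th R) (@step_small R) (th_unb R) be _ i hpos.
  by exists (k, z).
have [h Hh] := choice H.
exists (fun i => (h i).1); split.
  by move=> N; exists N => i hi; apply: leq_trans hi (Hh i).1.
set d := fun i => th R (h i).1 - (be + (h i).2%:R * (pi *+ 2)).
have hd : d @ \oo --> (0 : R).
  apply/cvgrPdist_lt => e he; have [N HN] := inv_small _ he.
  exists N => // i /= hi; rewrite sub0r normrN.
  exact: lt_trans (Hh i).2 (HN _ hi).
have hthd : forall i, th R (h i).1 = (be + d i) + (h i).2%:R * (pi *+ 2).
  by move=> i; rewrite /d; ring.
have hbd : (fun i => be + d i) @ \oo --> be.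
  have := cvgD (FF := eventually_filter) (@cvg_cst _ be nat \oo eventually_filter) hd.
  by rewrite addr0.
have hcos : (fun i => cos (th R (h i).1)) @ \oo --> cos be.
  have E : (fun i => cos (th R (h i).1)) = (@cos R) \o (fun i => be + d i).
    by apply: funext => i /=; rewrite hthd (cos_per R _ _).1.
  rewrite E; exact: (@continuous_cvg nat R R \oo eventually_filter _ _ _ (@continuous_cos R be) hbd).
have hsin : (fun i => sin (th R (h i).1)) @ \oo --> sin be.
  have E : (fun i => sin (th R (h i).1)) = (@sin R) \o (fun i => be + d i).
    by apply: funext => i /=; rewrite hthd (cos_per R _ _).2.
  rewrite E; exact: (@continuous_cvg nat R R \oo eventually_filter _ _ _ (@continuous_sin R be) hbd).
have hr : (fun i => rr R (h i).1) @ \oo --> (1 : R).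
  by apply: rrn_cvg => N; exists N => i hi; apply: leq_trans hi (Hh i).1.
rewrite hy; apply: (@cvg_mxP R nat \oo eventually_filter) => i j.
rewrite (ord1 i) rot_e0E.
have E : (fun t => iter (h t).1 (@fF R m) (x0 R m) ord0 j) = (fun t => rr R (h t).1 *
  (if j == i0 m then cos (th R (h t).1) else if j == i1 m then sin (th R (h t).1) else 0)).
  by apply: funext => t; rewrite seq_entry.
rewrite E.
case: ifP => _.
  by rewrite -[cos be]mul1r; exact: (cvgM (FF := eventually_filter) hr hcos).
case: ifP => _.
  by rewrite -[sin be]mul1r; exact: (cvgM (FF := eventually_filter) hr hsin).
rewrite -[0 : R](mulr0 1); apply: (cvgM (FF := eventually_filter) hr).
rewrite mulr0; exact: (@cvg_cst _ (0:R) nat \oo eventually_filter).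
Qed.

Lemma C_sphere y : Cset y -> sphere_n R m.+2 y.
Proof.
case=> hy01 hyj; rewrite /sphere_n /= /enorm sum_split big1 ?addr0 ?hy01 ?sqrtr1 //.
by move=> i _; rewrite hyj ?ii0 ?ii1 // expr0n.
Qed.

Definition Fp (y : V) : 'rV[R]_2 :=
  \row_(j < 2) (if j == ord0 then y ord0 (i0 m) else y ord0 (i1 m)).
Definition Gp (z : 'rV[R]_2) : V :=
  \row_j (if j == i0 m then z ord0 ord0 else if j == i1 m then z ord0 (lift ord0 ord0) else 0).

Lemma enorm2 (z : 'rV[R]_2) : enorm z = Num.sqrt (z ord0 ord0 ^+ 2 + z ord0 (lift ord0 ord0) ^+ 2).
Proof. by rewrite /enorm !big_ord_recl big_ord0 addr0. Qed.

Lemma mx_cont_entry (T : topologicalType) k (u : T -> 'rV[R]_k) :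
  (forall j, continuous (fun t => u t ord0 j)) -> continuous u.
Proof.
move=> H p; apply: (@cvg_mxP R T (nbhs p) (@nbhs_filter T p)) => i j.
by rewrite (ord1 i); apply: H.
Qed.

Lemma homeo_C : homeomorphic Cset (sphere_n R 2).
Proof.
exists Fp, Gp; split.
  case=> y [hy01 _]; rewrite /sphere_n /= enorm2 !mxE /=.
  by rewrite hy01 sqrtr1.
split.
  move=> z; rewrite /sphere_n /= enorm2 => hz.
  have hs : z ord0 ord0 ^+ 2 + z ord0 (lift ord0 ord0) ^+ 2 = 1.
    rewrite -[LHS]sqr_sqrtr ?hz ?expr1n //.
    by apply: addr_ge0; apply: sqr_ge0.
  split; first by rewrite !mxE eqxx i10 eqxx.
  by move=> j h0 h1; rewrite mxE (negbTE h0) (negbTE h1).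
split.
  case=> y [hy01 hyj]; apply/rowP => j; rewrite !mxE /=.
  case: ifP => [/eqP->|h0] //.
  case: ifP => [/eqP->|h1] //.
  by rewrite hyj ?h0 ?h1.
split.
  move=> z _; apply/rowP => j; rewrite !mxE.
  rewrite eqxx i10 eqxx; case: ifP => [/eqP->|h0] //.
  congr (z ord0 _); apply/val_inj => /=.
  by case: j h0 => [[|[|k]] hk] //.
split; apply: continuous_subspaceT; apply: mx_cont_entry => j.
  rewrite (_ : (fun t : V => Fp t ord0 j) = fun t : V => if j == ord0 then t ord0 (i0 m) else t ord0 (i1 m)).
    by case: (j == ord0); apply: coord_continuous.
  by apply: funext => t; rewrite mxE.
rewrite (_ : (fun t : 'rV[R]_2 => Gp t ord0 j) = fun t : 'rV[R]_2 => if j == i0 m then t ord0 ord0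
  else if j == i1 m then t ord0 (lift ord0 ord0) else 0); last first.
  by apply: funext => t; rewrite mxE.
case: (j == i0 m); first exact: coord_continuous.
case: (j == i1 m); first exact: coord_continuous.
move=> t; exact: (@cvg_cst _ (0:R) _ (nbhs t) (@nbhs_filter _ t)).
Qed.
End Omega.

Lemma fF_fix_sphere (R : realType) m (x : 'rV[R]_m.+2) : enorm x = 1 -> fF R m x = x.
Proof.
move=> h; rewrite /fF h /sF /thF.
rewrite (_ : (2 - 1) / (1 + 1 - 1 ^+ 2) = 1 :> R); last by rewrite expr1n; field.
by rewrite subrr mulr0 addr0 ln1 rot0 scale1r.
Qed.

Lemma rot_zero (R : realType) m (a : R) : rot a (0 : 'rV[R]_m.+2) = 0.
Proof.
apply/rowP => j; rewrite !mxE; case: ifP => _; first ring.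
by case: ifP => _ //; ring.
Qed.

Lemma enorm0 (R : realType) m : enorm (0 : 'rV[R]_m.+2) = 0.
Proof. by rewrite -(scale0r (0 : 'rV[R]_m.+2)) enormZ normr0 mul0r. Qed.

Theorem proposition4p1 (R : realType) (n : nat) (hn : (2 <= n)%N) :
  exists (f g : 'rV[R]_n -> 'rV[R]_n),
    homeo_via (ball_n R n) (ball_n R n) f g /\
    (sphere_n R n `|` [set 0]) `<=` Fix (ball_n R n) f /\
    exists x : 'rV[R]_n,
      ball_n R n x /\ ~ (sphere_n R n `|` [set 0]) x /\
      omega_limit f x `<=` sphere_n R n /\
      homeomorphic (omega_limit f x) (sphere_n R 2).
Proof.
case: n hn => [|[|m]] // _.
exists (fF R m), (gG R m); split; first exact: homeo_fg.
split.
  move=> x [hs|h0].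
    have hs' : enorm x = 1 by exact: hs.
    split; first by rewrite /ball_n /= hs'.
    exact: fF_fix_sphere.
  have -> : x = 0 by exact: h0.
  split; first by rewrite /ball_n /= enorm0 ler01.
  by rewrite /fF rot_zero scaler0.
have hx0 : enorm (x0 R m) = 2^-1.
  by rewrite /x0 enormZ enorm_e0 mulr1 ger0_norm // invr_ge0 ler0n.
exists (x0 R m); split; first by rewrite /ball_n /= hx0; lra.
split.
  move=> [hs|h0].
    have hs' : enorm (x0 R m) = 1 by exact: hs.
    move: hs'; rewrite hx0; lra.
  have h0' : x0 R m = 0 by exact: h0.
  move: hx0; rewrite h0' enorm0; lra.
have -> : omega_limit (fF R m) (x0 R m) = Cset R m.
  by apply/seteqP; split => y; [apply: omega_C | apply: C_omega].
split; first by move=> y /C_sphere.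
exact: homeo_C.
Qed.
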